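(* Let $L\in\mathbb Z^+$ and let $\mathcal C$ be a linear $[n,k]$ MDS code over $F$ with $k<n$ and $k/n\ge 1-\frac1L$; let $H$ be an $(n-k)\times n$ parity-check matrix of $\mathcal C$. Then $\mathcal C$ is lightly-$L$-MDS if and only if $\det\big(M_{J_0,J_1,\dots,J_L}(H)\big)\neq0$ for every collection of $L+1$ pairwise disjoint subsets $J_0,J_1,\dots,J_L\subseteq\{1,\dots,n\}$ satisfying (S1) $|J_m|\le n-k$ for all $m\in\{0,\dots,L\}$, and (S2) $\sum_{m=0}^{L}|J_m|=L(n-k)$.
   Context: $F=\mathrm{GF}(q)$; $\mathsf w(\cdot)$ is Hamming weight. For a matrix $H$ with columns indexed by $\{1,\dots,n\}$ and $J\subseteq\{1,\dots,n\}$, $(H)_J$ denotes the submatrix of columns indexed by $J$. For subsets $J_0,\dots,J_L$, $M_{J_0,\dots,J_L}(H)$ is the block matrix with $L$ block rows and $L+1$ block columns, whose $m$-th block row ($m=1,\dots,L$) is $\big(-(H)_{J_0}\ \big|\ 0\ \cdots\ 0\ \big|\ (H)_{J_m}\ \big|\ 0\cdots 0\big)$, i.e., the first block column is $-(H)_{J_0}$ in every block row, and the block in block row $m$ and block column $m$ (block columns numbered $0,\dots,L$) is $(H)_{J_m}$, all other blocks being zero. Under (S2) it is square of order $L(n-k)$. A linear $[n,k,d]$ code $\mathcal C$ is lightly-$(\tau,L)$-list decodable ($L\in\mathbb Z^+$, nonnegative $\tau\in\frac{1}{L+1}\mathbb Z$) if there do not exist $L+1$ nonzero vectors $e_0,\dots,e_L\in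 F^n$, each of Hamming weight at most $d-1$, all in the same coset of $\mathcal C$, with pairwise disjoint supports and $\sum_{m=0}^L\mathsf w(e_m)\le(L+1)\tau$. The code is lightly-$L$-MDS if it is lightly-$\left(\frac{L(n-k)}{L+1},L\right)$-list decodable. *)

(* Defs.v *)
From HB Require Import structures.
From mathcomp Require Import all_boot all_order all_algebra all_field.
Set Implicit Arguments. Unset Strict Implicit. Unset Printing Implicit Defensive.
Import Order.TTheory GRing.Theory.
Local Open Scope ring_scope.

Section Defs.
Variables (F : finFieldType) (n r : nat).
(* H : parity-check matrix with r = n - k rows; the code is its kernel *)
Variable H : 'M[F]_(r, n).

Definition supp (c : 'rV[F]_n) : {set 'I_n} := [set i | c 0 i != 0].
Definition wt (c : 'rV[F]_n) : nat := #|supp c|.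

Definition in_code (c : 'rV[F]_n) : bool := H *m c^T == 0.

Definition is_MDS : Prop :=
  forall c : 'rV[F]_n, c != 0 -> in_code c -> (r + 1 <= wt c)%N.

(* lightly-(tau,L)-list decodable, for a code of minimum distance d;
   the parameter T stands for (L+1) * tau (a nonnegative integer). *)
Definition lightly_ld (d L T : nat) : Prop :=
  ~ exists e : 'I_L.+1 -> 'rV[F]_n,
      [/\ forall m, e m != 0,
          forall m, (wt (e m) <= d - 1)%N,
          forall m m', in_code (e m - e m'),
          forall m m', m != m' -> [disjoint supp (e m) & supp (e m')]
        & (\sum_(m < L.+1) wt (e m) <= T)%N].

(* lightly-L-MDS for an MDS code: d = n - k + 1 = r + 1,
   (L+1) tau = L (n - k) = L r. *)
Definition lightly_MDS (L : nat) : Prop := lightly_ld (r + 1) L (L * r).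

Definition Hcols (J : {set 'I_n}) : 'M[F]_(r, #|J|) :=
  colsub (fun j : 'I_#|J| => enum_val j) H.

(* The block matrix M_{J_0,...,J_L}(H) with L block rows and L+1 block
   columns, block row i (i < L, i.e. m = i+1) being
   ( -(H)_{J_0} | 0 ... | (H)_{J_{i+1}} | 0 ... ). *)
Definition Mblock (L : nat) (J : 'I_L.+1 -> {set 'I_n}) :
  'M[F]_(\sum_(i < L) r, \sum_(m < L.+1) #|J m|) :=
  \mxblock_(i < L, m < L.+1)
     (if val m == 0%N then - Hcols (J m)
      else if val m == i.+1 then Hcols (J m) else 0).

(* its square version (conform_mx returns Mblock itself whenever
   \sum_m #|J m| = L r, i.e. under (S2)) *)
Definition Msq (L : nat) (J : 'I_L.+1 -> {set 'I_n}) : 'M[F]_(\sum_(i < L) r) :=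
  conform_mx 0 (Mblock J).

End Defs.

(* Main.v *)
Require Import Defs.
From HB Require Import structures.
From mathcomp Require Import all_boot all_order all_algebra all_field.
From mathcomp Require Import zify.
Set Implicit Arguments. Unset Strict Implicit. Unset Printing Implicit Defensive.
Lemma card_bigcup_sum n L (S : 'I_L -> {set 'I_n}) :
  #|\bigcup_m S m| <= \sum_m #|S m|.
Proof.
elim/big_rec2: _ => [|m k U _ le]; first by rewrite cards0.
by rewrite (leq_trans (leq_card_setU (S m) U).1) ?leq_add2l.
Qed.

Lemma extend n L r : 0 < r -> L * r <= n ->
  forall S : 'I_L.+1 -> {set 'I_n},
  (forall m m', m != m' -> [disjoint S m & S m']) ->
  (forall m, #|S m| <= r) ->
  \sum_m #|S m| <= L * r ->
  exists J : 'I_L.+1 -> {set 'I_n},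
   [/\ forall m, S m \subset J m,
       forall m m', m != m' -> [disjoint J m & J m'],
       forall m, #|J m| <= r
     & \sum_m #|J m| = L * r].
Proof.
move=> r0 Ln S.
move: {2}(L * r - \sum_m #|S m|) (erefl (L * r - \sum_m #|S m|)) => d.
elim: d S => [|d IH] S Ed dS cS sS.
  exists S; split=> //; apply/eqP; rewrite eqn_leq sS /=.
  by rewrite -subn_eq0 Ed.
have lt : \sum_m #|S m| < L * r by rewrite -subn_gt0 Ed.
have [a aU] : exists a, a \notin \bigcup_m S m.
  have : 0 < #|~: \bigcup_m S m|.
    have := cardsC (\bigcup_m S m); rewrite card_ord => E.
    have := card_bigcup_sum S; lia.
  by case/card_gt0P => a; rewrite inE => ?; exists a.
have [m0 cm0] : exists m0, #|S m0| < r.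
  apply/existsP; apply: contraLR lt; rewrite negb_exists => /forallP al.
  have : \sum_(m < L.+1) r <= \sum_m #|S m|.
    by apply: leq_sum => m _; rewrite leqNgt; apply: al.
  rewrite sum_nat_const card_ord; nia.
have aS m : a \notin S m.
  by apply: contra aU => am; apply/bigcupP; exists m.
pose S' m := if m == m0 then a |: S m else S m.
have sum' : \sum_m #|S' m| = (\sum_m #|S m|).+1.
  rewrite (bigD1 m0) //= [in RHS](bigD1 m0) //= /S' eqxx cardsU1 aS add1n.
  rewrite addSn; congr (_ + _).+1; apply: eq_bigr => m /negbTE ->. done.
case: (IH S').
- by rewrite sum'; lia.
- move=> m m' ne; rewrite /S'.
  case: (m =P m0) => [e1|n1]; case: (m' =P m0) => [e2|n2].
  + by move: ne; rewrite e1 e2 eqxx.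
  + rewrite disjoints_subset subUset sub1set inE aS -disjoints_subset.
    by rewrite /= dS.
  + rewrite disjoint_sym disjoints_subset subUset sub1set inE aS -disjoints_subset.
    by rewrite /= disjoint_sym dS.
  + exact: dS.
- by move=> m; rewrite /S'; case: eqP => [->|]; rewrite ?cardsU1 ?aS.
- by rewrite sum'.
move=> J [sub dJ cJ sJ]; exists J; split=> // m.
apply: subset_trans (sub m); rewrite /S'; case: eqP => // _; exact: subsetUr.
Qed.

Import Order.TTheory GRing.Theory.
Local Open Scope ring_scope.

Definition Pm (F : finFieldType) n (J : {set 'I_n}) : 'M[F]_(#|J|, n) :=
  \matrix_(t, i) ((enum_val t == i)%:R).

Lemma HcolsE (F : finFieldType) n r (H : 'M[F]_(r, n)) (J : {set 'I_n}) :
  Hcols H J = H *m (Pm F J)^T.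
Proof.
apply/matrixP => a t; rewrite !mxE (bigD1 (enum_val t)) //= big1 ?addr0.
  by rewrite !mxE eqxx mulr1.
by move=> i /negbTE ne; rewrite !mxE eq_sym ne mulr0.
Qed.

Lemma PmPmT (F : finFieldType) n (J : {set 'I_n}) :
  Pm F J *m (Pm F J)^T = 1%:M.
Proof.
apply/matrixP => t s; rewrite !mxE (bigD1 (enum_val t)) //= big1 ?addr0.
  by rewrite !mxE eqxx mul1r (inj_eq enum_val_inj) eq_sym.
by move=> i /negbTE ne; rewrite !mxE eq_sym ne mul0r.
Qed.

Lemma PmT_restr (F : finFieldType) n (J : {set 'I_n}) (c : 'rV[F]_n) :
  supp c \subset J -> (Pm F J)^T *m (Pm F J *m c^T) = c^T.
Proof.
move=> sJ; apply/matrixP => i z; rewrite ord1 !mxE.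
have ev t : (Pm F J *m c^T) t 0 = c 0 (enum_val t).
  rewrite !mxE (bigD1 (enum_val t)) //= big1 ?addr0.
    by rewrite !mxE eqxx mul1r.
  by move=> j /negbTE ne; rewrite !mxE eq_sym ne mul0r.
under eq_bigr do rewrite ev !mxE.
case: (boolP (i \in J)) => iJ.
  rewrite (bigD1 (enum_rank_in iJ i)) //= enum_rankK_in // eqxx mul1r big1 ?addr0 //.
  move=> t ne; case: eqP => [e|]; last by rewrite mul0r.
  by case/eqP: ne; apply: enum_val_inj; rewrite enum_rankK_in.
have -> : c 0 i = 0.
  by apply/eqP; apply: contraNT iJ => nz; apply: (subsetP sJ); rewrite inE.
rewrite big1 // => t _; case: eqP => [e|]; last by rewrite mul0r.
by case/negP: iJ; rewrite -e enum_valP.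
Qed.

Lemma supp_spread (F : finFieldType) n (J : {set 'I_n}) (y : 'cV[F]_#|J|) :
  supp (y^T *m Pm F J) \subset J.
Proof.
apply/subsetP => i; rewrite inE; apply: contraNT => iJ; rewrite !mxE big1 //.
move=> t _; rewrite !mxE; case: eqP => [e|]; last by rewrite mulr0.
by case/negP: iJ; rewrite -e enum_valP.
Qed.

Lemma spread_eq0 (F : finFieldType) n (J : {set 'I_n}) (y : 'cV[F]_#|J|) :
  (y^T *m Pm F J == 0) = (y == 0).
Proof.
apply/eqP/eqP => [e|->]; last by rewrite trmx0 mul0mx.
have : y^T *m Pm F J *m (Pm F J)^T = 0 by rewrite e mul0mx.
by rewrite -mulmxA PmPmT mulmx1 => /(congr1 trmx); rewrite trmxK trmx0.
Qed.

Lemma det_conf (F : finFieldType) p q (A : 'M[F]_(p, q)) : q = p ->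
  (\det (conform_mx (0 : 'M_p) A) == 0) <-> exists2 v : 'cV[F]_q, v != 0 & A *m v = 0.
Proof.
move=> E; case: p / E A => A; rewrite conform_mx_id -det_tr.
split=> [/det0P [v nz vA]|[v nz Av]].
  exists v^T; first by rewrite -(inj_eq (@trmx_inj _ _ _)) trmxK trmx0.
  by apply: trmx_inj; rewrite trmx_mul trmxK vA trmx0.
apply/det0P; exists v^T; first by rewrite -(inj_eq (@trmx_inj _ _ _)) trmxK trmx0.
by rewrite -trmx_mul Av trmx0.
Qed.
Lemma Mblock_mul (F : finFieldType) n r L (H : 'M[F]_(r, n))
  (J : 'I_L.+1 -> {set 'I_n}) (x : forall m : 'I_L.+1, 'cV[F]_#|J m|) :
  Mblock H J *m \mxcol_m x m =
  \mxcol_(i < L) (Hcols H (J (lift ord0 i)) *m x (lift ord0 i)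
                  - Hcols H (J ord0) *m x ord0).
Proof.
rewrite /Mblock mul_mxblock_mxrow; apply: eq_mxcol => i.
rewrite big_ord_recl /= mulNmx addrC; congr (_ + _).
rewrite (bigD1 i) //= eqxx big1 ?addr0 // => j /negbTE ne.
by rewrite eqSS (val_eqE j i) ne mul0mx.
Qed.
Lemma syn (F : finFieldType) n r (H : 'M[F]_(r, n)) (J : {set 'I_n}) (y : 'cV[F]_#|J|) :
  H *m (y^T *m Pm F J)^T = Hcols H J *m y.
Proof. by rewrite trmx_mul trmxK HcolsE mulmxA. Qed.

Theorem mainTheorem13 (F : finFieldType) (n k L : nat)
    (H : 'M[F]_(n - k, n)) :
  (0 < L)%N -> (k < n)%N ->
  ((L - 1) * n <= L * k)%N ->            (* k/n >= 1 - 1/L *)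
  \rank H = (n - k)%N ->                 (* H is a parity-check matrix of an [n,k] code *)
  is_MDS H ->
  (lightly_MDS H L <->
   forall J : 'I_L.+1 -> {set 'I_n},
     (forall m m', m != m' -> [disjoint J m & J m']) ->
     (forall m, (#|J m| <= n - k)%N) ->
     (\sum_(m < L.+1) #|J m| = L * (n - k))%N ->
     \det (Msq H J) != 0).
Proof.
move=> L0 kn Lk _ mds.
have Lrn : (L * (n - k) <= n)%N.
  rewrite mulnBr; move: Lk; rewrite mulnBl mul1n; lia.
have sumr : (\sum_(i < L) (n - k) = L * (n - k))%N by rewrite sum_nat_const card_ord.
split.
- move=> lMDS J dJ cJ sJ; apply/negP; rewrite /Msq.
  move/(det_conf (Mblock H J) (etrans sJ (esym sumr))) => [v nz Mv].
  pose x m := submxcol v m.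
  move: Mv; rewrite -(submxcolK v) Mblock_mul => Mv.
  have rowi i : Hcols H (J (lift ord0 i)) *m x (lift ord0 i) = Hcols H (J ord0) *m x ord0.
    have := congr1 (fun A => submxcol A i) Mv; rewrite /= mxcolK submxcol0.
    by move/eqP; rewrite subr_eq0 => /eqP.
  pose e m := (x m)^T *m Pm F (J m).
  have se m : H *m (e m)^T = H *m (e ord0)^T.
    rewrite !syn; case: (unliftP ord0 m) => [i ->|->] //; exact: rowi.
  have wJ m : (wt (e m) <= #|J m|)%N by apply: subset_leq_card; apply: supp_spread.
  apply: lMDS; exists e; split.
  + move=> m; apply/negP => /eqP em0.
    have z m' : e m' = 0.
      apply/eqP; apply: contraT => nz'.
      have := mds _ nz'; rewrite /in_code se -(se m) em0 trmx0 mulmx0 eqxx => /(_ isT).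
      have := leq_trans (wJ m') (cJ m'); lia.
    case/negP: nz; apply/eqP/mxcolP => i; rewrite submxcol0.
    by apply/eqP; rewrite -spread_eq0; apply/eqP; apply: z.
  + by move=> m; rewrite addnK; apply: leq_trans (wJ m) (cJ m).
  + by move=> m m'; rewrite /in_code linearB /= mulmxBr !se subrr.
  + move=> m m' ne; apply: (disjointWl (supp_spread _)).
    by apply: (disjointWr (supp_spread _)); apply: dJ.
  + by rewrite -sJ; apply: leq_sum => m _; apply: wJ.
- move=> Hdet [e [nz we ce de se]].
  have [J [sub dJ cJ sJ]] := @extend n L (n - k)%N ltac:(lia) Lrn (fun m => supp (e m))
     de (fun m => leq_trans (we m) (eq_leq (addnK 1 (n - k)%N))) se.
  have := Hdet J dJ cJ sJ; apply/negP; apply/negPn; rewrite /Msq.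
  apply/(det_conf (Mblock H J) (etrans sJ (esym sumr))).
  exists (\mxcol_m (Pm F (J m) *m (e m)^T)).
    apply/negP => /eqP v0.
    have := congr1 (fun A => submxcol A ord0) v0; rewrite /= mxcolK submxcol0 => x0.
    have := PmT_restr (sub ord0); rewrite x0 mulmx0 => /(congr1 trmx).
    by rewrite trmxK trmx0 => E; case/negP: (nz ord0); rewrite -E.
  rewrite Mblock_mul; apply/mxcolP => i; rewrite mxcolK submxcol0.
  rewrite !HcolsE -!mulmxA !PmT_restr ?sub //.
  by apply/eqP; rewrite -mulmxBr -linearB; apply: ce.
Qed.
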